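(* Suppose $\Xi=\{\boldsymbol{\xi}\in\mathbb{R}^m:(\boldsymbol{\xi}-\boldsymbol{\xi}_0)^{\top}\boldsymbol{W}^{-1}(\boldsymbol{\xi}-\boldsymbol{\xi}_0)\le1\}$ with $\boldsymbol{W}\succ0$, and $f_t(\boldsymbol{x},\boldsymbol{\xi})=\boldsymbol{w}_t(\boldsymbol{\xi})^{\top}\boldsymbol{x}$ for all $t\in[T]$, where each component is $w_{tj}(\boldsymbol{\xi})=\boldsymbol{\xi}^{\top}\boldsymbol{W}_{tj}\boldsymbol{\xi}+\boldsymbol{r}_{tj}^{\top}\boldsymbol{\xi}+h_{tj}$ with $\boldsymbol{W}_{tj}\succeq0$, $j\in[n]$. Set $\boldsymbol{W}_t(\boldsymbol{x})=\sum_{j=1}^nx_j\boldsymbol{W}_{tj}$, $\boldsymbol{R}_t(\boldsymbol{x})=\sum_{j=1}^nx_j\boldsymbol{r}_{tj}$, $H_t(\boldsymbol{x})=\sum_{j=1}^nx_jh_{tj}$. Let $\tilde Z_{C_2}$ be the set of $\boldsymbol{x}\in\mathbb{R}^n$ for which there exist $\alpha_t>0$, $q_{it}\ge0$, $\boldsymbol{v}_{it}\in\mathbb{R}^m$ ($i\in[N],t\in[T]$) with, for all $i,t$, $\|\boldsymbol{v}_{it}\|_*\delta+\frac1N\sum_{j=1}^Nq_{jt}\le\epsilon\alpha_t$ and $\sup_{\boldsymbol{\xi}\in\Xi}[\boldsymbol{v}_{it}^{\top}\boldsymbol{\xi}-f_t(\boldsymbol{x},\boldsymbol{\xi})]+\alpha_t-\boldsymbol{v}_{it}^{\top}\boldsymbol{\zeta}^i-q_{it}\le0$.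 Then $\tilde Z_{C_2}$ equals the set of $\boldsymbol{x}\in\mathbb{R}^n$ for which there exist $\alpha_t>0$, $q_{it}\ge0$, $\boldsymbol{v}_{it}\in\mathbb{R}^m$, $u_{it}\in\mathbb{R}$, $\nu_{it}\ge0$ such that for all $i\in[N],t\in[T]$: $$\|\boldsymbol{v}_{it}\|_*\delta+\frac1N\sum_{j=1}^Nq_{jt}\le\epsilon\alpha_t,\qquad u_{it}-H_t(\boldsymbol{x})+\alpha_t-\boldsymbol{v}_{it}^{\top}\boldsymbol{\zeta}^i\le q_{it},$$ $$\begin{bmatrix}\boldsymbol{W}_t(\boldsymbol{x})+\nu_{it}\boldsymbol{W}^{-1}&-\frac12(2\nu_{it}\boldsymbol{W}^{-1}\boldsymbol{\xi}_0+\boldsymbol{v}_{it}-\boldsymbol{R}_t(\boldsymbol{x}))\\-\frac12(2\nu_{it}\boldsymbol{W}^{-1}\boldsymbol{\xi}_0+\boldsymbol{v}_{it}-\boldsymbol{R}_t(\boldsymbol{x}))^{\top}&u_{it}+\nu_{it}\boldsymbol{\xi}_0^{\top}\boldsymbol{W}^{-1}\boldsymbol{\xi}_0-\nu_{it}\end{bmatrix}\succeq0.$$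
   Context: Setting: $\epsilon\in(0,1)$, $\delta>0$, $[T]=\{1,\dots,T\}$; $\boldsymbol{\zeta}^1,\dots,\boldsymbol{\zeta}^N\in\Xi$ given samples; $\|\cdot\|_*$ is the dual norm of a norm on $\mathbb{R}^m$; $\succeq0$ ($\succ0$) denotes positive semidefinite (definite). *)

(* Defs.v *)
From HB Require Import structures.
From mathcomp Require Import all_boot all_order all_algebra.
From mathcomp Require Import all_classical all_reals ereal.
Set Implicit Arguments. Unset Strict Implicit. Unset Printing Implicit Defensive.
Import Order.TTheory GRing.Theory Num.Theory.
Local Open Scope classical_set_scope.
Local Open Scope ring_scope.

Definition dotv (R : ringType) (m : nat) (u v : 'cV[R]_m) : R := (u^T *m v) 0 0.

Definition psd (R : numDomainType) (m : nat) (A : 'M[R]_m) : Prop :=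
  A^T = A /\ forall x : 'cV[R]_m, 0 <= dotv x (A *m x).
Definition pd (R : numDomainType) (m : nat) (A : 'M[R]_m) : Prop :=
  A^T = A /\ forall x : 'cV[R]_m, x != 0 -> 0 < dotv x (A *m x).

Definition is_norm (R : realType) (m : nat) (nrm : 'cV[R]_m -> R) : Prop :=
  [/\ forall x, nrm x = 0 -> x = 0,
      forall (a : R) x, nrm (a *: x) = `|a| * nrm x &
      forall x y, nrm (x + y) <= nrm x + nrm y].

Definition dual_norm (R : realType) (m : nat) (nrm : 'cV[R]_m -> R)
  (v : 'cV[R]_m) : R := sup [set dotv v x | x in [set x | nrm x <= 1]].

Definition Xi_ell (R : realType) (m : nat) (xi0 : 'cV[R]_m) (W : 'M[R]_m)
  : set 'cV[R]_m :=
  [set xi | dotv (xi - xi0) (invmx W *m (xi - xi0)) <= 1].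

Section Model.
Variables (R : realType) (m n T : nat).
Variables (Wtj : 'I_T -> 'I_n -> 'M[R]_m) (rtj : 'I_T -> 'I_n -> 'cV[R]_m)
          (htj : 'I_T -> 'I_n -> R).

Definition w_comp (t : 'I_T) (j : 'I_n) (xi : 'cV[R]_m) : R :=
  dotv xi (Wtj t j *m xi) + dotv (rtj t j) xi + htj t j.

Definition f_obj (t : 'I_T) (x : 'cV[R]_n) (xi : 'cV[R]_m) : R :=
  \sum_(j < n) w_comp t j xi * x j 0.

Definition Wt_x (t : 'I_T) (x : 'cV[R]_n) : 'M[R]_m := \sum_(j < n) x j 0 *: Wtj t j.
Definition Rt_x (t : 'I_T) (x : 'cV[R]_n) : 'cV[R]_m := \sum_(j < n) x j 0 *: rtj t j.
Definition Ht_x (t : 'I_T) (x : 'cV[R]_n) : R := \sum_(j < n) x j 0 * htj t j.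
End Model.

Section Sets.
Variables (R : realType) (m n T N : nat).
Variables (eps delta : R) (nrm : 'cV[R]_m -> R) (zeta : 'I_N -> 'cV[R]_m)
          (xi0 : 'cV[R]_m) (W : 'M[R]_m)
          (Wtj : 'I_T -> 'I_n -> 'M[R]_m) (rtj : 'I_T -> 'I_n -> 'cV[R]_m)
          (htj : 'I_T -> 'I_n -> R).

Definition Z_C2 : set 'cV[R]_n :=
  [set x | exists (alpha : 'I_T -> R) (q : 'I_N -> 'I_T -> R)
                  (v : 'I_N -> 'I_T -> 'cV[R]_m),
     (forall t, 0 < alpha t) /\ (forall i t, 0 <= q i t) /\
     forall i t,
       dual_norm nrm (v i t) * delta + N%:R^-1 * (\sum_(j < N) q j t) <= eps * alpha t
       /\ (ereal_sup [set (dotv (v i t) xi - f_obj Wtj rtj htj t x xi)%:E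
                        | xi in Xi_ell xi0 W]
           + (alpha t - dotv (v i t) (zeta i) - q i t)%:E <= 0)%E].

Definition Z_SDP : set 'cV[R]_n :=
  [set x | exists (alpha : 'I_T -> R) (q : 'I_N -> 'I_T -> R)
                  (v : 'I_N -> 'I_T -> 'cV[R]_m) (u : 'I_N -> 'I_T -> R)
                  (nu : 'I_N -> 'I_T -> R),
     (forall t, 0 < alpha t) /\ (forall i t, 0 <= q i t) /\
     (forall i t, 0 <= nu i t) /\
     forall i t,
       let b : 'cV[R]_m :=
         (2 * nu i t) *: (invmx W *m xi0) + v i t - Rt_x rtj t x in
       [/\ dual_norm nrm (v i t) * delta + N%:R^-1 * (\sum_(j < N) q j t) <= eps * alpha t,
           u i t - Ht_x htj t x + alpha t - dotv (v i t) (zeta i) <= q i t &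
           psd (block_mx (Wt_x Wtj t x + nu i t *: invmx W) (- (2%:R^-1) *: b)
                         (- (2%:R^-1) *: b^T)
                         (u i t + nu i t * dotv xi0 (invmx W *m xi0) - nu i t)%:M)]].
End Sets.

(* Main.v *)
Require Import Defs.
From HB Require Import structures.
From mathcomp Require Import all_boot all_order all_algebra.
From mathcomp Require Import all_classical all_reals ereal.
From mathcomp Require Import lra ring.
Import Order.TTheory GRing.Theory Num.Theory.
Local Open Scope classical_set_scope.
Local Open Scope ring_scope.
Set Implicit Arguments. Unset Strict Implicit.


Section Scal.
Variable R : realType.

Lemma quad_lead_ge0 (a b k : R) :
  (forall s, 0 <= a * s ^+ 2 + b * s + k) -> 0 <= a.
Proof.
move=> H; rewrite leNgt; apply/negP => a0.
pose t := (`|b| + `|k|) / (- a) + 1.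
have ht1 : 1 <= t.
  rewrite /t lerDr divr_ge0 // ?addr_ge0 // ?normr_ge0 //; lra.
have hta : a * t + `|b| + `|k| = a.
  rewrite /t; field; by rewrite lt_eqF.
have hk : k <= `|k| * t.
  apply: le_trans (ler_norm k) _; rewrite -{1}[`|k|]mulr1 ler_wpM2l //.
have [s hs] : exists s, s ^+ 2 = t ^+ 2 /\ b * s <= `|b| * t.
  case: (lerP 0 b) => b0.
    by exists t; rewrite ger0_norm.
  exists (- t); rewrite sqrrN ltr0_norm //; split => //; rewrite mulrN mulNr //.
have t0 : 0 < t by lra.
have := H s; case: hs => -> hs.
have : t * (a * t + `|b| + `|k|) < 0 by rewrite hta; nra.
nra.
Qed.

Lemma line_ineq (G2 s1 s2 Q2 Q1 Q0 : R) :
  0 < G2 -> s2 < 0 -> 0 < s1 -> s1 < 1 ->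
  0 <= Q2 * s1 ^+ 2 + Q1 * s1 + Q0 ->
  0 <= Q2 * s2 ^+ 2 + Q1 * s2 + Q0 ->
  0 <= (Q2 + Q1 + Q0) * (- (G2 * s1 * s2)) +
       Q0 * (G2 + (- G2 * (s1 + s2)) + G2 * s1 * s2).
Proof.
move=> g2 s20 s10 s11 q1 q2.
have e : ((Q2 + Q1 + Q0) * (- (G2 * s1 * s2)) +
       Q0 * (G2 + (- G2 * (s1 + s2)) + G2 * s1 * s2)) * (s1 - s2) =
   G2 * ((- s2) * (1 - s2) * (Q2 * s1 ^+ 2 + Q1 * s1 + Q0)
        + s1 * (1 - s1) * (Q2 * s2 ^+ 2 + Q1 * s2 + Q0)).
  ring.
have hpos : 0 < s1 - s2 by lra.
have : 0 <= G2 * ((- s2) * (1 - s2) * (Q2 * s1 ^+ 2 + Q1 * s1 + Q0)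
        + s1 * (1 - s1) * (Q2 * s2 ^+ 2 + Q1 * s2 + Q0)).
  apply: mulr_ge0; first lra.
  apply: addr_ge0; apply: mulr_ge0 => //; apply: mulr_ge0; lra.
rewrite -e => h.
by move: h; rewrite pmulr_lge0.
Qed.

Lemma scal_lemma0 (G2 G1 G0 Q2 Q1 Q0 : R) :
  0 < G2 -> G0 < 0 -> 0 < G2 + G1 + G0 ->
  (forall s, G2 * s ^+ 2 + G1 * s + G0 <= 0 -> 0 <= Q2 * s ^+ 2 + Q1 * s + Q0) ->
  0 <= (Q2 + Q1 + Q0) * (- G0) + Q0 * (G2 + G1 + G0).
Proof.
move=> g2 g0 g1 H0.
pose gf := fun s => G2 * s ^+ 2 + G1 * s + G0.
pose qf := fun s => Q2 * s ^+ 2 + Q1 * s + Q0.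
have hg : forall s, gf s = G2 * s ^+ 2 + G1 * s + G0 by [].
have hq : forall s, qf s = Q2 * s ^+ 2 + Q1 * s + Q0 by [].
have H : forall s, gf s <= 0 -> 0 <= qf s by [].

pose D := G1 ^+ 2 - 4 * G2 * G0.
have D0 : 0 < D by rewrite /D; nra.
pose e := Num.sqrt D.
have e2 : e ^+ 2 = D by rewrite sqr_sqrtr // ltW.
have e0 : 0 < e by rewrite sqrtr_gt0.
pose s1 := (- G1 + e) / (2 * G2).
pose s2 := (- G1 - e) / (2 * G2).
have G2n : G2 != 0 by rewrite gt_eqF.
have eG1' : G1 = - G2 * (s1 + s2) by rewrite /s1 /s2; field.
have eG0' : G0 = G2 * s1 * s2.
  have -> : G2 * s1 * s2 = (G1^+2 - e^+2) / (4 * G2).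
    rewrite /s1 /s2; field; done.
  rewrite e2 /D; field; done.
have hs1 : gf s1 = 0 by rewrite hg eG1' eG0'; ring.
have hs2 : gf s2 = 0 by rewrite hg eG1' eG0'; ring.
have q1 : 0 <= qf s1 by apply: H; rewrite hs1.
have q2 : 0 <= qf s2 by apply: H; rewrite hs2.
rewrite hq in q1; rewrite hq in q2.
have s12 : s2 < s1.
  rewrite /s1 /s2 ltr_pM2r ?invr_gt0 ?mulr_gt0 //; lra.
rewrite eG0' in g0.
have ps : s1 * s2 < 0 by rewrite -(pmulr_rlt0 _ g2) mulrA.
have s20 : s2 < 0 by nra.
have s10 : 0 < s1 by nra.
rewrite eG1' eG0' in g1.
have f1 : 0 < (1 - s1) * (1 - s2).
  have e3 : G2 + - G2 * (s1 + s2) + G2 * s1 * s2 = G2 * ((1 - s1) * (1 - s2)) by ring.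
  by rewrite e3 pmulr_rgt0 in g1.
have s11 : s1 < 1.
  have : 0 < 1 - s2 by lra.
  move=> h; move: f1; rewrite pmulr_lgt0 //; lra.
rewrite eG0' eG1'.
have := @line_ineq G2 s1 s2 Q2 Q1 Q0 g2 s20 s10 s11 q1 q2.
congr (_ <= _); ring.
Qed.
End Scal.



Section Vec.
Variables (R : realType) (m : nat).
Implicit Types (u v z d : 'cV[R]_m) (M P : 'M[R]_m).

Lemma dotvE u v : dotv u v = \sum_i u i 0 * v i 0.
Proof. by rewrite /dotv !mxE; apply: eq_bigr => i _; rewrite mxE. Qed.

Lemma dotvC u v : dotv u v = dotv v u.
Proof. by rewrite !dotvE; apply: eq_bigr => i _; rewrite mulrC. Qed.

Lemma dotvDl u1 u2 v : dotv (u1 + u2) v = dotv u1 v + dotv u2 v.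
Proof. by rewrite /dotv linearD /= mulmxDl mxE. Qed.
Lemma dotvDr u v1 v2 : dotv u (v1 + v2) = dotv u v1 + dotv u v2.
Proof. by rewrite /dotv mulmxDr mxE. Qed.
Lemma dotvZl a u v : dotv (a *: u) v = a * dotv u v.
Proof. by rewrite /dotv linearZ /= -scalemxAl mxE. Qed.
Lemma dotvZr a u v : dotv u (a *: v) = a * dotv u v.
Proof. by rewrite /dotv -scalemxAr mxE. Qed.
Lemma dotvNl u v : dotv (- u) v = - dotv u v.
Proof. by rewrite -scaleN1r dotvZl mulN1r. Qed.
Lemma dotvNr u v : dotv u (- v) = - dotv u v.
Proof. by rewrite -scaleN1r dotvZr mulN1r. Qed.
Lemma dotvBl u1 u2 v : dotv (u1 - u2) v = dotv u1 v - dotv u2 v.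
Proof. by rewrite dotvDl dotvNl. Qed.
Lemma dotvBr u v1 v2 : dotv u (v1 - v2) = dotv u v1 - dotv u v2.
Proof. by rewrite dotvDr dotvNr. Qed.
Lemma dotv0l v : dotv 0 v = 0.
Proof. by rewrite /dotv trmx0 mul0mx mxE. Qed.
Lemma dotv0r v : dotv v 0 = 0.
Proof. by rewrite /dotv mulmx0 mxE. Qed.
Lemma dotv_mulmx u M v : dotv u (M *m v) = dotv (M^T *m u) v.
Proof. by rewrite /dotv trmx_mul trmxK mulmxA. Qed.

Lemma quad_line M z d s :
  dotv (z + s *: d) (M *m (z + s *: d)) =
  s ^+ 2 * dotv d (M *m d) + s * (dotv z (M *m d) + dotv d (M *m z))
  + dotv z (M *m z).
Proof.
rewrite mulmxDr -scalemxAr !dotvDl !dotvDr !dotvZl !dotvZr; ring.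
Qed.

Definition gE P xi0 xi := dotv (xi - xi0) (P *m (xi - xi0)) - 1.
Definition qf M b (c : R) xi := dotv xi (M *m xi) + dotv b xi + c.

Lemma pair_ineq P M b c xi0 :
  (forall d, d != 0 -> 0 < dotv d (P *m d)) ->
  (forall xi, gE P xi0 xi <= 0 -> 0 <= qf M b c xi) ->
  forall y z, 0 < gE P xi0 y -> gE P xi0 z < 0 ->
  0 <= qf M b c y * (- gE P xi0 z) + qf M b c z * gE P xi0 y.
Proof.
move=> hP H y z gy gz.
pose d := y - z.
have e1' : z + d = y by rewrite /d addrC subrK.
have dn0 : d != 0.
  apply/negP => /eqP d0; move: e1'; rewrite d0 addr0 => ezy.
  by move: gy; rewrite -ezy => /(lt_trans gz); rewrite ltxx.
pose G2 := dotv d (P *m d).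
pose G1 := dotv (z - xi0) (P *m d) + dotv d (P *m (z - xi0)).
pose G0 := gE P xi0 z.
pose Q2 := dotv d (M *m d).
pose Q1 := dotv z (M *m d) + dotv d (M *m z) + dotv b d.
pose Q0 := qf M b c z.
have Eg : forall s, gE P xi0 (z + s *: d) = G2 * s ^+ 2 + G1 * s + G0.
  move=> s; rewrite /gE addrAC quad_line /G2 /G1 /G0 /gE; ring.
have Eq : forall s, qf M b c (z + s *: d) = Q2 * s ^+ 2 + Q1 * s + Q0.
  move=> s; rewrite /qf quad_line dotvDr dotvZr /Q2 /Q1 /Q0 /qf; ring.
have Ey : forall (f : 'cV[R]_m -> R) A2 A1 A0,
    (forall s, f (z + s *: d) = A2 * s ^+ 2 + A1 * s + A0) -> f y = A2 + A1 + A0.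
  move=> f A2 A1 A0 hf; have := hf 1; rewrite scale1r e1' => ->; ring.
rewrite (Ey _ _ _ _ Eg) (Ey _ _ _ _ Eq).
apply: scal_lemma0.
- exact: hP.
- exact: gz.
- by rewrite -(Ey _ _ _ _ Eg).
- by move=> s; rewrite -Eg -Eq; apply: H.
Qed.

Lemma gE_xi0 P xi0 : gE P xi0 xi0 = -1.
Proof. by rewrite /gE subrr dotv0l sub0r. Qed.

Lemma div_helper (p q a b : R) : 0 < a -> 0 < b -> 0 <= p * a + q * b ->
  - p / b <= q / a.
Proof.
move=> a0 b0 h.
rewrite -subr_ge0.
have -> : q / a - - p / b = (p * a + q * b) / (a * b).
  by field; rewrite !gt_eqF.
by rewrite divr_ge0 // ltW // mulr_gt0.
Qed.

Lemma slemma P M b c xi0 :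
  (forall d, d != 0 -> 0 < dotv d (P *m d)) ->
  (forall xi, gE P xi0 xi <= 0 -> 0 <= qf M b c xi) ->
  exists nu, 0 <= nu /\ forall xi, 0 <= qf M b c xi + nu * gE P xi0 xi.
Proof.
move=> hP H.
set g := gE P xi0; set q := qf M b c.
pose S := [set r | exists2 y, 0 < g y & r = - q y / g y].
have Sub : forall r, S r -> r <= q xi0.
  move=> r [y gy ->].
  have g0 : g xi0 < 0 by rewrite /g gE_xi0 ltrN10.
  have := @pair_ineq P M b c xi0 hP H y xi0 gy g0.
  rewrite /g gE_xi0.
  rewrite opprK mulr1 => h.
  by rewrite -[q xi0]divr1; apply: div_helper => //; rewrite mulr1 in h *.
have Slow : forall r z, S r -> g z < 0 -> r <= q z / (- g z).
  move=> r z [y gy ->] gz.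
  apply: div_helper => //; first by rewrite oppr_gt0.
  exact: (@pair_ineq P M b c xi0 hP H).
case: (pselect (S !=set0)) => [Sn0|S0].
- have hs : has_sup S by split => //; exists (q xi0) => r /Sub.
  exists (Num.max 0 (sup S)); split; first by rewrite le_max lexx.
  move=> xi.
  case: (ltgtP 0 (g xi)) => gxi.
  + have Sr : S (- q xi / g xi) by exists xi.
    have h1 : - q xi / g xi <= Num.max 0 (sup S).
      by rewrite le_max (sup_upper_bound hs Sr) orbT.
    have := ler_wpM2r (ltW gxi) h1.
    rewrite !mulNr divfK ?gt_eqF // => h; lra.
  + have gn : 0 < - g xi by rewrite oppr_gt0.
    have h1 : Num.max 0 (sup S) <= q xi / (- g xi).
      rewrite ge_max; apply/andP; split.
        by apply: divr_ge0; [apply: H; exact: ltW | exact: ltW].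
      by apply: ge_sup => // r Sr; apply: Slow.
    have := ler_wpM2r (ltW gn) h1.
    rewrite divfK ?gt_eqF // => h; lra.
  + move: gxi; rewrite /g /q => gxi; rewrite -gxi mulr0 addr0; apply: H; by rewrite -gxi.
- exists 0; split => // xi; rewrite mul0r addr0; apply: H.
  rewrite leNgt; apply/negP => gxi; apply: S0.
  by exists (- q xi / g xi); exists xi.
Qed.
End Vec.



Section Mat.
Variables (R : realType) (m : nat).
Implicit Types (u v z d xi : 'cV[R]_m) (M P A : 'M[R]_m).

Lemma pd_unit (W : 'M[R]_m) : pd W -> W \in unitmx.
Proof.
case=> _ hW; rewrite -row_free_unit -kermx_eq0; apply/negP => /negP K.
have [i hi] : exists i, row i (kermx W) != 0.
  apply/existsP; apply: contraNT K; rewrite negb_exists => /forallP h.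
  apply/eqP/row_matrixP => i; rewrite row0; exact/eqP/negbNE/h.
have nz : (row i (kermx W))^T != 0 by rewrite trmx_eq0.
have := hW _ nz.
rewrite /dotv trmxK mulmxA.
have -> : row i (kermx W) *m W = 0.
  by rewrite -row_mul mulmx_ker row0.
by rewrite mul0mx mxE ltxx.
Qed.

Lemma pd_inv (W : 'M[R]_m) : pd W -> (invmx W)^T = invmx W /\
  forall d, d != 0 -> 0 < dotv d (invmx W *m d).
Proof.
move=> hW; have Wu := @pd_unit W hW; case: hW => Ws hW.
split; first by rewrite trmx_inv Ws.
move=> d dn0; set y := invmx W *m d.
have dy : d = W *m y by rewrite /y mulKVmx.
have yn0 : y != 0.
  by apply: contraNneq dn0 => y0; rewrite dy y0 mulmx0.
by rewrite {1}dy dotvC; apply: hW.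
Qed.

Lemma dotv_sumr u (I : finType) (F : I -> 'cV[R]_m) :
  dotv u (\sum_i F i) = \sum_i dotv u (F i).
Proof. exact: (big_morph (dotv u) (dotvDr u) (dotv0r u)). Qed.
Lemma dotv_suml u (I : finType) (F : I -> 'cV[R]_m) :
  dotv (\sum_i F i) u = \sum_i dotv (F i) u.
Proof. by rewrite dotvC dotv_sumr; apply: eq_bigr => i _; rewrite dotvC. Qed.

Lemma block_quad (M1 : 'M[R]_m) (b : 'cV[R]_m) (k : R) y (s : 'cV[R]_1) :
  dotv (col_mx y s) (block_mx M1 (- (2%:R^-1) *: b) (- (2%:R^-1) *: b^T) k%:M
        *m col_mx y s)
  = dotv y (M1 *m y) - s 0 0 * dotv b y + (s 0 0) ^+ 2 * k.
Proof.
rewrite mul_block_col.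
have dc : forall (p : 'cV[R]_m) (q : 'cV[R]_1) (y' : 'cV[R]_m) (s' : 'cV[R]_1),
    dotv (col_mx y' s') (col_mx p q) = dotv y' p + dotv s' q.
  by move=> p q y' s'; rewrite /dotv tr_col_mx mul_row_col mxE.
rewrite dc.
have d1 : forall q : 'cV[R]_1, dotv s q = s 0 0 * q 0 0.
  by move=> q; rewrite dotvE big_ord1.
have e1 : ((- 2%:R^-1 *: b^T) *m y) 0 0 = - 2%:R^-1 * dotv b y by rewrite -scalemxAl mxE.
have e2 : forall (p q : 'cV[R]_1), (p + q) 0 0 = p 0 0 + q 0 0 by move=> p q; rewrite mxE.
have e3 : forall a (p : 'cV[R]_1), (a *: p) 0 0 = a * p 0 0 by move=> a p; rewrite mxE.
have e4 : forall a : R, (a%:M : 'M[R]_1) 0 0 = a by move=> a; rewrite mxE mulr1n.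
rewrite d1 [s]mx11_scalar mul_mx_scalar mul_scalar_mx dotvDr !dotvZr e2 e1 e3 !e4 (dotvC y b).
by field.
Qed.

Lemma psd_block (M1 : 'M[R]_m) (b : 'cV[R]_m) (k : R) :
  M1^T = M1 -> (forall xi, 0 <= dotv xi (M1 *m xi) - dotv b xi + k) ->
  psd (block_mx M1 (- (2%:R^-1) *: b) (- (2%:R^-1) *: b^T) k%:M).
Proof.
move=> M1s H; split.
  by rewrite tr_block_mx M1s !linearZ /= trmxK tr_scalar_mx.
move=> w; rewrite -(vsubmxK w); set y := usubmx w; set s := dsubmx w.
rewrite block_quad; set S := s 0 0.
have [->|Sn0] := eqVneq S 0.
  rewrite mul0r subr0 expr0n /= mul0r addr0.
  apply: (@quad_lead_ge0 R _ (- dotv b y) k) => tau.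
  have := H (tau *: y).
  by rewrite -scalemxAr !dotvZl !dotvZr; congr (_ <= _); ring.
have := H (S^-1 *: y).
rewrite -scalemxAr !dotvZl !dotvZr => h.
have : 0 <= S ^+ 2 * (S^-1 * (S^-1 * dotv y (M1 *m y)) - S^-1 * dotv b y + k).
  by apply: mulr_ge0 => //; rewrite sqr_ge0.
by congr (_ <= _); field.
Qed.

Lemma psd_block_inv (M1 : 'M[R]_m) (b : 'cV[R]_m) (k : R) :
  psd (block_mx M1 (- (2%:R^-1) *: b) (- (2%:R^-1) *: b^T) k%:M) ->
  forall xi, 0 <= dotv xi (M1 *m xi) - dotv b xi + k.
Proof.
case=> _ H xi; have := H (col_mx xi 1%:M).
by rewrite block_quad mxE /= mulr1n mul1r expr1n mul1r.
Qed.

Lemma keyid A P (r v : 'cV[R]_m) (u nu : R) xi0 xi :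
  P^T = P ->
  dotv xi ((A + nu *: P) *m xi) - dotv ((2 * nu) *: (P *m xi0) + v - r) xi
    + (u + nu * dotv xi0 (P *m xi0) - nu)
  = qf A (r - v) u xi + nu * gE P xi0 xi.
Proof.
move=> Ps; rewrite /qf /gE.
rewrite mulmxDl -scalemxAl !(mulmxDl, mulmxDr, mulmxN, mulNmx, dotvDl, dotvDr, dotvNl, dotvNr, dotvZl, dotvZr).
rewrite (dotv_mulmx xi0 P xi) Ps (dotvC (P *m xi0) xi).
ring.
Qed.
End Mat.



Lemma f_objE (R : realType) (m n T : nat) (Wtj : 'I_T -> 'I_n -> 'M[R]_m)
  (rtj : 'I_T -> 'I_n -> 'cV[R]_m) (htj : 'I_T -> 'I_n -> R) t x xi :
  f_obj Wtj rtj htj t x xi =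
  dotv xi (Wt_x Wtj t x *m xi) + dotv (Rt_x rtj t x) xi + Ht_x htj t x.
Proof.
rewrite /f_obj /Wt_x /Rt_x /Ht_x mulmx_suml dotv_sumr dotv_suml -!big_split /=.
apply: eq_bigr => j _; rewrite /w_comp -scalemxAl dotvZr dotvZl; ring.
Qed.

Lemma Wt_x_sym (R : realType) (m n T : nat) (Wtj : 'I_T -> 'I_n -> 'M[R]_m) t x :
  (forall t j, psd (Wtj t j)) -> (Wt_x Wtj t x)^T = Wt_x Wtj t x.
Proof.
move=> hW; rewrite /Wt_x linear_sum; apply: eq_bigr => j _.
by rewrite linearZ /=; case: (hW t j) => ->.
Qed.

Unset Implicit Arguments.
Theorem proposition4 (R : realType) (m n T N : nat) (eps delta : R)
  (nrm : 'cV[R]_m -> R) (zeta : 'I_N -> 'cV[R]_m)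
  (xi0 : 'cV[R]_m) (W : 'M[R]_m)
  (Wtj : 'I_T -> 'I_n -> 'M[R]_m) (rtj : 'I_T -> 'I_n -> 'cV[R]_m)
  (htj : 'I_T -> 'I_n -> R) :
  0 < eps < 1 -> 0 < delta -> is_norm nrm ->
  pd W -> (forall t j, psd (Wtj t j)) ->
  Z_C2 eps delta nrm zeta xi0 W Wtj rtj htj =
  Z_SDP eps delta nrm zeta xi0 W Wtj rtj htj.
Proof.
move=> _ _ _ hW hWtj.
have [Ps Ppd] := pd_inv hW.
set P := invmx W in Ps Ppd *.
have XiE : forall xi, Xi_ell xi0 W xi <-> gE P xi0 xi <= 0.
  by move=> xi; rewrite /Xi_ell /gE /= subr_le0.
apply/seteqP; split => x /=.
- move=> [alpha [q [v [ha [hq hall]]]]].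
  pose u i t := Ht_x htj t x - alpha t + dotv (v i t) (zeta i) + q i t.
  have hnu : forall it : 'I_N * 'I_T, exists nu : R, 0 <= nu /\
      forall xi, 0 <= qf (Wt_x Wtj it.2 x) (Rt_x rtj it.2 x - v it.1 it.2)
                         (u it.1 it.2) xi + nu * gE P xi0 xi.
    move=> [i t] /=; apply: slemma => // xi gxi.
    have [_ hs] := hall i t.
    have hxi : ((dotv (v i t) xi - f_obj Wtj rtj htj t x xi)%:E <=
        ereal_sup [set (dotv (v i t) xi - f_obj Wtj rtj htj t x xi)%:E
                        | xi in Xi_ell xi0 W])%E.
      by apply: ereal_sup_ubound; exists xi => //; apply/XiE.
    have := le_trans (leeD2r (alpha t - dotv (v i t) (zeta i) - q i t)%:E hxi) hs.
    rewrite -EFinD lee_fin f_objE /qf /u dotvBl => h; lra.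
  have [f hf] := choice hnu.
  exists alpha, q, v, u, (fun i t => f (i, t)).
  split => //; split => //; split; first by move=> i t; case: (hf (i, t)).
  move=> i t /=; have [_ hft] := hf (i, t); have [h1 _] := hall i t.
  split => //; first by rewrite /u; lra.
  apply: psd_block.
    by rewrite linearD /= Wt_x_sym // linearZ /= Ps.
  by move=> xi; rewrite keyid //; exact: hft.
- move=> [alpha [q [v [u [nu [ha [hq [hnu hall]]]]]]]].
  exists alpha, q, v; split => //; split => // i t.
  have [h1 h2 h3] := hall i t; split => //.
  have hb := psd_block_inv h3.
  set c := alpha t - dotv (v i t) (zeta i) - q i t.
  have hub : (ereal_sup [set (dotv (v i t) xi - f_obj Wtj rtj htj t x xi)%:E
                        | xi in Xi_ell xi0 W] <= (- c)%:E)%E.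
    apply: ge_ereal_sup => _ [xi /XiE gxi <-]; rewrite lee_fin.
    have := hb xi; rewrite keyid // f_objE /qf dotvBl => h.
    have : 0 <= nu i t * - gE P xi0 xi by rewrite mulr_ge0 // oppr_ge0.
    rewrite /c; nra.
  have := leeD2r c%:E hub.
  by rewrite -EFinD addNr.
Qed.
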